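(* For integers $n\ge j\ge1$ and $m\ge0$ let $T_{n,j,m}$ be the number of ordered increasing $k$-trees of size $n$ in which node $j$ has out-degree $m$. Then $T_{n,j,m}=((k+1)n-km-2k)\,T_{n-1,j,m}+km\,T_{n-1,j,m-1}$ for $n>j$, and the generating function $T^{[j]}(z,v):=\sum_{n\ge j}\sum_{m\ge0}T_{n,j,m}\frac{z^{n-j}}{(n-j)!}v^m$ is given by \[ T^{[j]}(z,v)=\frac{T_j}{\Big(1-v\big(1-(1-(k+1)z)^{\frac{k}{k+1}}\big)\Big)\,(1-(k+1)z)^{\frac{kj-k+j+1}{k+1}}}, \] where $T_j=\prod_{\ell=0}^{j-1}(1+(k+1)\ell)$ is the number of ordered increasing $k$-trees of size $j$.
   Context: Fix an integer $k\ge1$. An ordered increasing $k$-tree of size $n\ge0$ is built as follows. Start with the root-clique $K_0$: $k$ pairwise adjacent vertices labelled $0_1,\dots,0_k$ (the root nodes; each label $0_\ell$ has value $0$). For $j=1,\dots,n$ in turn, node $j$ is inserted by choosing a currently existing $k$-clique $K$ and attaching $j$ to it, i.e. adding edges from $j$ to all $k$ vertices of $K$; $j$ is then a child of $K$ and the vertices of $K$ are the parents of $j$. The $k$-cliques available for attachment are the root-clique and, for every previously inserted node $x$ attached to a clique $K'$, the $k$ cliques $\{x\}\cup(K'\setminus\{w\})$, $w\in K'$. The children of each $k$-clique are linearly ordered: if $K$ currently has $d^+(K)$ children, there are $d^+(K)+1$ positions at which the new child may be placed, and the choice of position is part of the structure; distinct sequences of choices give distinct trees. The out-degree of a node $u$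 is the number of nodes having $u$ as a parent. Convention: $T_{n,j,m}=0$ for $m<0$, $T_{j,j,0}=T_j$ and $T_{j,j,m}=0$ for $m>0$. *)

(* Defs.v *)
From HB Require Import structures.
From mathcomp Require Import all_boot all_order all_algebra.
Set Implicit Arguments. Unset Strict Implicit. Unset Printing Implicit Defensive.
Import Order.TTheory GRing.Theory Num.Theory.

(* ---------- Ordered increasing k-trees, encoded by their choice sequences ----------
   Vertices: (false, l) is the root node 0_(l+1) (l < k); (true, x) is node x (x >= 1).
   A tree of size n is the sequence t of its n insertion choices:
   nth t (x-1) = (c, p) means node x is attached to clique number c and placed at
   position p (0 <= p <= current number of children of that clique).
   Cliques are numbered in order of creation: clique 0 is the root clique, and
   node x creates the k cliques numbered 1 + k(x-1) + w (w < k), namely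
   {x} u (K' \ {w-th vertex of K'}) where K' is the clique x was attached to. *)

Definition vtx := (bool * nat)%type.

Definition root_clique (k : nat) : seq vtx := [seq (false, l) | l <- iota 0 k].

Fixpoint cliques (k : nat) (t : seq (nat * nat)) (x : nat) : seq (seq vtx) :=
  match x with
  | 0 => [:: root_clique k]
  | x'.+1 =>
      let st := cliques k t x' in
      let K := nth [::] st (nth (0, 0) t x').1 in
      st ++ [seq (true, x'.+1) :: (take w K ++ drop w.+1 K) | w <- iota 0 k]
  end.

Definition nchildren (t : seq (nat * nat)) (c : nat) : nat :=
  count (fun q => q.1 == c) t.

Fixpoint trees (k n : nat) : seq (seq (nat * nat)) :=
  match n with
  | 0 => [:: [::]]
  | n'.+1 =>
      flatten [seq [seq rcons t (c, p) | c <- iota 0 (1 + k * n'),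
                                        p <- iota 0 (nchildren t c).+1]
              | t <- trees k n']
  end.

Definition parents (k : nat) (t : seq (nat * nat)) (x : nat) : seq vtx :=
  nth [::] (cliques k t (size t)) (nth (0, 0) t x.-1).1.

Definition outdeg (k : nat) (t : seq (nat * nat)) (u : vtx) : nat :=
  count (fun x => u \in parents k t x) (iota 1 (size t)).

Definition Tcount (k n : nat) : nat := size (trees k n).

Definition Tnjm (k n j m : nat) : nat :=
  count (fun t => outdeg k t (true, j) == m) (trees k n).

Local Open Scope ring_scope.

Definition fps := nat -> rat.

Definition fone : fps := fun n => (n == 0%N)%:R.
Definition fmul (f g : fps) : fps := fun n => \sum_(i < n.+1) f i * g (n - i)%N.
Definition fpow (f : fps) (m : nat) : fps := iter m (fmul f) fone.

Definition gbinom (a : rat) (n : nat) : rat :=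
  (\prod_(i < n) (a - i%:R)) / n`!%:R.

(* the binomial series (1 - c z)^a *)
Definition powS (c a : rat) : fps := fun n => gbinom a n * (- c) ^+ n.

(* Main.v *)
Require Import Defs.
From Stdlib Require Import Lia.
From HB Require Import structures.
From mathcomp Require Import all_boot all_order all_algebra.
Import Order.TTheory GRing.Theory Num.Theory.

Ltac nlia :=
  repeat match goal with H : is_true (_ <= _) |- _ => move/ssrnat.leP: H => H end;
  try (match goal with |- is_true (_ <= _) => apply/ssrnat.leP end);
  try (match goal with |- is_true (_ == _) => apply/eqP end);
  unfold addn, muln, subn in *; lia.

Lemma size_cliques k t x : size (cliques k t x) = 1 + k * x.
Proof.
elim: x => [|x IH] /=; first by rewrite muln0.
by rewrite size_cat IH size_map size_iota mulnS; nlia.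
Qed.

Lemma cliques_rcons_prefix k t q x : x <= size t ->
  cliques k (rcons t q) x = cliques k t x.
Proof.
elim: x => [|x IH] Hx //=.
by rewrite IH ?(ltnW Hx) // nth_rcons Hx.
Qed.

Definition CL k t := cliques k t (size t).
Definition newcl k (t : seq (nat * nat)) c :=
  let K := nth [::] (CL k t) c in
  [seq (true, (size t).+1) :: (take w K ++ drop w.+1 K) | w <- iota 0 k].

Lemma CL_rcons k t c p : cliques k (rcons t (c, p)) (size t).+1 = CL k t ++ newcl k t c.
Proof.
rewrite /= cliques_rcons_prefix // nth_rcons ltnn eqxx.
by [].
Qed.

Lemma outdeg_rcons k t c p u :
  all (fun q => q.1 < 1 + k * size t) t -> c < 1 + k * size t ->
  outdeg k (rcons t (c, p)) u = outdeg k t u + (u \in nth [::] (CL k t) c).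
Proof.
move=> Hall Hc.
rewrite /outdeg size_rcons -(addn1 (size t)) iotaD count_cat /= addn0.
congr (_ + _).
  apply: eq_in_count => x; rewrite mem_iota => /andP [H1 H2].
  rewrite /parents size_rcons.
  have Hx : x.-1 < size t by rewrite prednK //; nlia.
  rewrite CL_rcons nth_rcons Hx nth_cat size_cliques.
  by have := (all_nthP (0, 0) Hall _ Hx) => /= ->.
rewrite /parents size_rcons add1n nth_rcons ltnn eqxx.
by rewrite CL_rcons nth_cat size_cliques Hc.
Qed.

Lemma outdeg_count k t u :
  outdeg k t u = count (fun q => u \in nth [::] (CL k t) q.1) t.
Proof.
set P := fun q => _.
rewrite /outdeg -[in RHS](mkseq_nth (0, 0) t) /mkseq count_map.
rewrite (iotaDl 1 0) count_map; apply: eq_count => x /=.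
by rewrite /parents /P add1n.
Qed.

Definition good k t : bool :=
  all (fun K : seq vtx => [&& size K == k, uniq K &
        all (fun v : vtx => ~~ v.1 || (v.2 <= size t)) K]) (CL k t).

Lemma good_nil k : good k [::].
Proof.
rewrite /good /CL /= andbT /root_clique size_map size_iota eqxx /=.
rewrite map_inj_uniq ?iota_uniq; last by move=> x y [].
by apply/allP => v /mapP [x _ ->].
Qed.

Lemma rem_subseq (K : seq vtx) w : subseq (take w K ++ drop w.+1 K) K.
Proof.
rewrite -{3}(cat_take_drop w K) cat_subseq //.
by rewrite -addn1 addnC -drop_drop drop_subseq.
Qed.

Lemma good_rcons k t c p : good k t -> c < 1 + k * size t ->
  good k (rcons t (c, p)).
Proof.
move=> Hg Hc; rewrite /good.
rewrite (_ : CL k (rcons t (c, p)) = cliques k (rcons t (c, p)) (size t).+1); last first.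
  by rewrite /CL size_rcons.
rewrite CL_rcons all_cat; apply/andP; split.
  apply: sub_all Hg => K /and3P [-> -> HK] /=.
  apply: sub_all HK => v /orP [->//|H]; rewrite size_rcons.
  by rewrite (leq_trans H) ?orbT.
have HK : nth [::] (CL k t) c \in CL k t by rewrite mem_nth // /CL size_cliques.
have /and3P [/eqP HsK HuK HvK] := allP Hg _ HK.
apply/allP => K' /mapP [w]; rewrite mem_iota add0n => /andP [_ Hw] ->.
set K := nth [::] (CL k t) c in HsK HuK HvK *.
apply/and3P; split.
- rewrite /= size_cat size_take size_drop HsK Hw; nlia.
- rewrite /= (subseq_uniq (rem_subseq K w)) // andbT.
  apply/negP => /(mem_subseq (rem_subseq K w)) Hin.
  by have := allP HvK _ Hin => /=; rewrite ltnn.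
- rewrite /= size_rcons leqnn /=.
  apply/allP => v /(mem_subseq (rem_subseq K w)) Hin.
  have := allP HvK _ Hin => /orP [->//|H].
  by rewrite (leq_trans H) ?orbT.
Qed.

Lemma in_drop_uniq (K : seq vtx) x n : uniq K -> x \in K ->
  (x \in drop n K) = (n <= index x K).
Proof.
move=> Hu Hx.
have H1 : x \in take n K ++ drop n K by rewrite cat_take_drop.
rewrite mem_cat in_take // in H1.
have /and3P [_ /hasPn Hn _] : [&& uniq (take n K), ~~ has (mem (take n K)) (drop n K)
   & uniq (drop n K)] by rewrite -cat_uniq cat_take_drop.
case: (ltnP (index x K) n) H1 => Hi /= H; first last.
  by rewrite H.
by apply/negP => /Hn; rewrite /= in_take // Hi.
Qed.

Lemma count_remove (K : seq vtx) k x : uniq K -> size K = k ->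
  count (fun w => x \in take w K ++ drop w.+1 K) (iota 0 k) = (x \in K) * (k - 1).
Proof.
move=> Hu Hs.
case Hx: (x \in K); last first.
  rewrite mul0n; apply/eqP; rewrite -leqn0 leqNgt -has_count; apply/hasP => [[w _]].
  by move/(mem_subseq (rem_subseq K w)); rewrite Hx.
have Hi : index x K < k by rewrite -Hs index_mem.
rewrite mul1n (eq_in_count (a2 := predC1 (index x K))); last first.
  move=> w _; rewrite mem_cat in_take // in_drop_uniq //= neq_ltn orbC.
  by [].
have := count_predC (pred1 (index x K)) (iota 0 k).
rewrite size_iota (count_uniq_mem _ (iota_uniq 0 k)) mem_iota Hi /= => E.
by rewrite -[in RHS]E addKn.
Qed.

Lemma mem_trees_S k n t' : t' \in trees k n.+1 ->
  exists t c p, [/\ t \in trees k n, c < 1 + k * n & t' = rcons t (c, p)].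
Proof.
move=> H.
have [s /mapP [t Ht Es] H'] := flattenP H; subst s.
have [s' /mapP [c Hc Es] H''] := flattenP H'; subst s'.
have [p _ ->] := mapP H''; exists t, c, p; split => //.
by move: Hc; rewrite mem_iota.
Qed.

Lemma good_nth k t c : good k t -> c < 1 + k * size t ->
  let K := nth [::] (CL k t) c in
  [/\ size K = k, uniq K & all (fun v : vtx => ~~ v.1 || (v.2 <= size t)) K].
Proof.
move=> Hg Hc K.
have HK : K \in CL k t by rewrite mem_nth // /CL size_cliques.
by have /and3P [/eqP -> -> ->] := allP Hg _ HK.
Qed.

Lemma count_newcl k t c x : good k t -> c < 1 + k * size t ->
  count (fun K => x \in K) (newcl k t c) =
  if x == (true, (size t).+1) then k else (x \in nth [::] (CL k t) c) * (k - 1).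
Proof.
move=> Hg Hc; have [Hs Hu _] := good_nth _ _ _ Hg Hc.
rewrite /newcl count_map.
under eq_count => w do rewrite /= in_cons.
case: eqP => _ /=; first by rewrite count_predT size_iota.
by rewrite count_remove.
Qed.

Definition Cj k j t := count (fun K => (true, j) \in K) (CL k t).

Lemma Cj_rcons k j t c p : Cj k j (rcons t (c, p)) = Cj k j t + count (fun K => (true, j) \in K) (newcl k t c).
Proof.
by rewrite /Cj {1}/CL size_rcons CL_rcons count_cat.
Qed.

Lemma notin_K k t c j : good k t -> c < 1 + k * size t -> size t < j ->
  (true, j) \in nth [::] (CL k t) c = false.
Proof.
move=> Hg Hc Hj; have [_ _ Hv] := good_nth _ _ _ Hg Hc.
apply/negP => /(allP Hv) /=.
by rewrite leqNgt Hj.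
Qed.

Lemma trees_inv k j n t : 1 <= k -> 1 <= j -> t \in trees k n ->
  [/\ size t = n, all (fun q => q.1 < 1 + k * n) t, good k t &
   [/\ (n < j -> Cj k j t = 0 /\ outdeg k t (true, j) = 0),
   (j <= n -> Cj k j t = k + (k - 1) * outdeg k t (true, j)) &
   (n = j -> outdeg k t (true, j) = 0)]].
Proof.
move=> hk hj; elim: n t => [|n IH] t.
  rewrite /= inE => /eqP ->; split => //; first exact: good_nil.
  split.
  move=> _; split => //; rewrite /Cj /CL /=.
  have -> : (true, j) \in root_clique k = false.
    by apply/negP => /mapP [l _ E]; discriminate E.
  by [].
  by rewrite leqNgt hj.
  by move=> E; rewrite -E in hj.
move=> /mem_trees_S [t0 [c [p [Ht0 Hc ->]]]].
have [Hs Hall Hg [H1 H2 H3]] := IH _ Ht0.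
have Hc' : c < 1 + k * size t0 by rewrite Hs.
have Hall' : all (fun q => q.1 < 1 + k * size t0) t0 by rewrite Hs.
rewrite Cj_rcons outdeg_rcons // count_newcl // Hs.
split.
- by rewrite size_rcons Hs.
- rewrite all_rcons /= (leq_trans Hc) ?leq_add2l ?leq_mul2l ?leqnSn ?orbT //=.
  by apply: sub_all Hall => q /= H; rewrite (leq_trans H) // leq_add2l leq_mul2l leqnSn orbT.
- by rewrite good_rcons.
split.
- move=> Hj; have [-> ->] := H1 (ltnW Hj).
  rewrite notin_K ?Hs ?(ltnW Hj) //.
  by have -> : ((true, j) == (true, n.+1)) = false by apply/negP => /eqP [E]; rewrite E ltnn in Hj.
- rewrite leq_eqVlt ltnS => /orP [/eqP Ej|Hj].
    have Hnj : n < j by rewrite Ej.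
    have [-> ->] := H1 Hnj.
    by rewrite -Ej eqxx notin_K ?Hs -?Ej // muln0 addn0.
  rewrite H2 //.
  have -> : ((true, j) == (true, n.+1)) = false by apply/negP => /eqP [E]; rewrite E ltnn in Hj.
  by rewrite mulnDr addnA (mulnC (nat_of_bool _)).
- move=> Ej; have Hnj : n < j by rewrite -Ej.
  have [_ ->] := H1 Hnj.
  by rewrite notin_K ?Hs -?Ej.
Qed.

Lemma count_sum (T : Type) (P : pred T) (s : seq T) : count P s = \sum_(x <- s) P x.
Proof. by elim: s => [|x s IH]; rewrite ?big_nil ?big_cons //= IH. Qed.

Lemma sum_const_seq (T : Type) (s : seq T) (X : nat) : \sum_(x <- s) X = size s * X.
Proof. by elim: s => [|x s IH]; rewrite ?big_nil ?big_cons //= IH mulSn. Qed.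

Lemma trees_S k n : trees k n.+1 = flatten [seq [seq rcons t (c, p) | c <- iota 0 (1 + k * n),
                                        p <- iota 0 (nchildren t c).+1]
              | t <- trees k n].
Proof. by []. Qed.

Lemma count_trees_S k n (P : pred (seq (nat * nat))) :
  count P (trees k n.+1) = \sum_(t <- trees k n) \sum_(c <- iota 0 (1 + k * n))
     \sum_(p <- iota 0 (nchildren t c).+1) P (rcons t (c, p)).
Proof.
rewrite trees_S count_flatten sumnE !big_map; apply: eq_bigr => t _.
rewrite count_flatten sumnE !big_map; apply: eq_bigr => c _.
by rewrite count_map count_sum.
Qed.

Lemma sum_nch (F : nat -> nat) t M : all (fun q => q.1 < M) t ->
  \sum_(c <- iota 0 M) F c * nchildren t c = \sum_(q <- t) F q.1.
Proof.
elim: t => [|q t IH] /=.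
  by move=> _; rewrite big_nil big1 // => c _; rewrite muln0.
move=> /andP [Hq Ht]; rewrite big_cons -IH //.
rewrite /nchildren /=.
under eq_bigr => c _ do rewrite mulnDr.
rewrite big_split /=; congr (_ + _).
rewrite (bigD1_seq q.1) ?iota_uniq ?mem_iota //= eqxx muln1.
by rewrite big1 ?addn0 // => c /negbTE; rewrite eq_sym => ->; rewrite muln0.
Qed.

Lemma sum1_iota M : \sum_(c <- iota 0 M) 1 = M.
Proof. by rewrite sum_const_seq size_iota muln1. Qed.

Lemma per_tree k j n m t : 1 <= k -> 1 <= j -> j <= n -> t \in trees k n ->
  let d := outdeg k t (true, j) in
  \sum_(c <- iota 0 (1 + k * n)) \sum_(p <- iota 0 (nchildren t c).+1)
     (outdeg k (rcons t (c, p)) (true, j) == m)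
  = (d == m) * (n + (1 + k * n) - k * d.+1) + (d.+1 == m) * (k * d.+1)
  /\ k * d.+1 <= n + (1 + k * n).
Proof.
move=> hk hj hjn Ht d.
have [Hs Hall Hg [_ H2 _]] := trees_inv _ _ _ _ hk hj Ht.
set M := 1 + k * n.
set b := fun c => (true, j) \in nth [::] (CL k t) c.
have Hall' : all (fun q => q.1 < 1 + k * size t) t by rewrite Hs.
rewrite (eq_big_seq (fun c => (nchildren t c).+1 * (d + b c == m))); last first.
  move=> c; rewrite mem_iota add0n => Hc.
  under eq_bigr => p _ do rewrite outdeg_rcons ?Hs //.
  by rewrite sum_const_seq size_iota.
rewrite (eq_bigr (fun c => (d == m) * (~~ b c * (nchildren t c).+1) +
                           (d.+1 == m) * (b c * (nchildren t c).+1))); last first.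
  by move=> c _; case: (b c); rewrite /= ?mul0n ?mul1n ?muln0 ?addn0 ?add0n ?addn1 mulnC.
rewrite big_split -!big_distrr.
set S0 := \sum_(c <- _) _ * _.
set S1 := \sum_(c <- _) b c * _.
have HS1 : S1 = d + Cj k j t.
  rewrite /S1; under eq_bigr => c _ do rewrite -addn1 mulnDr muln1.
  rewrite big_split sum_nch // /d outdeg_count count_sum; congr (_ + _).
  rewrite /Cj -(mkseq_nth [::] (CL k t)) /mkseq count_map count_sum /CL size_cliques Hs.
  by rewrite /M /b /CL Hs.
have HS : S0 + S1 = n + M.
  rewrite /S0 /S1 -big_split.
  rewrite (eq_bigr (fun c => 1 * nchildren t c + 1)); last first.
    by move=> c _; case: (b c); rewrite /= ?mul1n ?mul0n ?add0n ?addn0 addn1.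
  rewrite big_split sum_nch // sum1_iota.
  by rewrite -Hs -sum1_size.
have HS1' : S1 = k * d.+1.
  have E : (k - 1) * d + d = k * d by rewrite mulnBl mul1n subnK // leq_pmull.
  rewrite HS1 H2 // mulnS; nlia.
rewrite -HS1' -HS addnK; split => //.
by rewrite leq_addl.
Qed.

Local Open Scope ring_scope.

Lemma Posz_sum (T : Type) (s : seq T) (f : T -> nat) :
  ((\sum_(x <- s) f x)%N)%:Z = \sum_(x <- s) (f x)%:Z.
Proof. by elim: s => [|x s IH]; rewrite ?big_nil ?big_cons // PoszD IH. Qed.

Lemma per_tree_int (k n d m : nat) : (k * d.+1 <= n + (1 + k * n))%N ->
  (((d == m) * (n + (1 + k * n) - k * d.+1) + (d.+1 == m) * (k * d.+1))%N)%:Z =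
  (((k.+1 * n.+1)%N)%:Z - ((k * m)%N)%:Z - ((2 * k)%N)%:Z) * ((d == m) : nat)%:Z
    + ((k * m)%N)%:Z * ((d.+1 == m) : nat)%:Z.
Proof.
move=> H; case: (eqVneq d m) => [<-|Hne].
  have -> : (d.+1 == d) = false by rewrite eqn_leq ltnn.
  rewrite mul1n mul0n addn0 mulr1 mulr0 addr0.
  have E : (k.+1 * n.+1 = (n + (1 + k * n) - k * d.+1) + 2 * k + k * d)%N.
    rewrite mulnS in H *; nlia.
  by rewrite E !PoszD addrK addrK.
rewrite mul0n add0n mulr0 add0r.
by case: eqP => [<-|_]; rewrite ?mul1n ?mulr1 ?mul0n ?mulr0.
Qed.

Lemma rec_int k n j m : (1 <= k)%N -> (1 <= j)%N -> (j <= n)%N ->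
  (Tnjm k n.+1 j m)%:Z =
    (((k.+1 * n.+1)%N)%:Z - ((k * m)%N)%:Z - ((2 * k)%N)%:Z) * (Tnjm k n j m)%:Z
    + ((k * m)%N)%:Z * (count (fun t => (outdeg k t (true, j)).+1 == m) (trees k n))%:Z.
Proof.
move=> hk hj hjn.
rewrite /Tnjm count_trees_S !count_sum !Posz_sum !mulr_sumr -big_split.
apply: eq_big_seq => t Ht /=.
have [E H] := per_tree k j n m t hk hj hjn Ht.
by rewrite E per_tree_int.
Qed.

Lemma sum_nch1 k n t : (1 <= k)%N -> t \in trees k n ->
  (\sum_(c <- iota 0 (1 + k * n)) (nchildren t c).+1 = n + (1 + k * n))%N.
Proof.
move=> hk Ht.
have [Hs Hall _ _] := trees_inv k 1 n t hk (leqnn 1) Ht.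
rewrite (eq_bigr (fun c => 1 * nchildren t c + 1)%N); last by move=> c _; rewrite mul1n addn1.
by rewrite big_split sum_nch // sum1_iota -Hs -sum1_size.
Qed.

Lemma Tcount_S k n : (1 <= k)%N -> Tcount k n.+1 = (Tcount k n * (1 + k.+1 * n))%N.
Proof.
move=> hk; rewrite /Tcount -!(count_predT) count_trees_S.
rewrite (eq_big_seq (fun t => n + (1 + k * n))%N); last first.
  move=> t Ht; rewrite -(sum_nch1 _ _ _ hk Ht); apply: eq_bigr => c _.
  by rewrite sum_const_seq size_iota muln1.
rewrite sum_const_seq count_predT; congr (_ * _)%N.
by rewrite mulSn; nlia.
Qed.

Lemma Tcount_prod k j : (1 <= k)%N -> Tcount k j = (\prod_(l < j) (1 + k.+1 * l))%N.
Proof.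
move=> hk; elim: j => [|j IH]; first by rewrite big_ord0.
by rewrite Tcount_S // IH big_ord_recr.
Qed.

Lemma Tnjm_base k j m : (1 <= k)%N -> (1 <= j)%N ->
  Tnjm k j j m = ((m == 0%N) * Tcount k j)%N.
Proof.
move=> hk hj; rewrite /Tnjm /Tcount.
rewrite (eq_in_count (a2 := fun _ => m == 0%N)); last first.
  move=> t Ht; have [_ _ _ [_ _ H3]] := trees_inv k j j t hk hj Ht.
  by rewrite H3 // eq_sym.
by case: (m == 0%N); rewrite ?count_predT ?count_pred0 ?mul1n ?mul0n.
Qed.

Lemma powS_rec (c a : rat) n :
  (n.+1)%:R * powS c a n.+1 = c * (n%:R - a) * powS c a n.
Proof.
rewrite /powS /gbinom big_ord_recr /= factS natrM exprS.
set G := \prod_(i < n) _.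
have Hn : (n.+1)%:R != 0 :> rat by rewrite pnatr_eq0.
rewrite invfM -!mulrA.
rewrite (mulrCA (a - n%:R)) (mulrCA G) mulVKf //.
rewrite [in LHS](mulrCA (n`!%:R^-1)) [in LHS](mulrCA (a - n%:R)) [in LHS](mulrCA G).
rewrite [in LHS](mulrCA G) !mulrA; congr (_ * _).
by rewrite mulNr -mulrN opprB mulrC.
Qed.

Definition PL (L : nat) (f : fps) : {poly rat} := \poly_(i < L) f i.
Definition eqK (L : nat) (p q : {poly rat}) := forall i, (i < L)%N -> p`_i = q`_i.

Lemma coef_PL L f i : (i < L)%N -> (PL L f)`_i = f i.
Proof. by move=> Hi; rewrite coef_poly Hi. Qed.

Lemma fmul_coef L f g (p q : {poly rat}) :
  (forall i, (i < L)%N -> f i = p`_i) -> (forall i, (i < L)%N -> g i = q`_i) ->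
  forall i, (i < L)%N -> fmul f g i = (p * q)`_i.
Proof.
move=> Hf Hg i Hi; rewrite coefM /fmul; apply: eq_bigr => l _.
have Hl : (l <= i)%N by rewrite -ltnS ltn_ord.
rewrite Hf ?Hg //; first by rewrite (leq_ltn_trans (leq_subr _ _) Hi).
by rewrite (leq_ltn_trans Hl Hi).
Qed.

Lemma fpow_coef L f (p : {poly rat}) m :
  (forall i, (i < L)%N -> f i = p`_i) ->
  forall i, (i < L)%N -> fpow f m i = (p ^+ m)`_i.
Proof.
move=> Hf; elim: m => [|m IH] i Hi.
  by rewrite expr0 coef1 /fpow /= /fone.
by rewrite exprS -(fmul_coef _ _ _ _ _ Hf IH _ Hi).
Qed.

Lemma eqK_mulr L (p q r : {poly rat}) : eqK L p q -> eqK L (p * r) (q * r).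
Proof.
move=> H i Hi; rewrite !coefM; apply: eq_bigr => l _; rewrite H //.
by rewrite (leq_ltn_trans _ Hi) // -ltnS ltn_ord.
Qed.

Lemma eqK_mull L (p q r : {poly rat}) : eqK L p q -> eqK L (r * p) (r * q).
Proof. by move=> H; rewrite ![r * _]mulrC; apply: eqK_mulr. Qed.

Lemma eqK_trans L (p q r : {poly rat}) : eqK L p q -> eqK L q r -> eqK L p r.
Proof. by move=> H1 H2 i Hi; rewrite H1 // H2. Qed.

Lemma eqK_add L (p q r s : {poly rat}) : eqK L p q -> eqK L r s -> eqK L (p + r) (q + s).
Proof. by move=> H1 H2 i Hi; rewrite !coefD H1 // H2. Qed.

Lemma eqK_scale L (p q : {poly rat}) a : eqK L p q -> eqK L (a *: p) (a *: q).
Proof. by move=> H i Hi; rewrite !coefZ H. Qed.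

Definition Upol (c : rat) : {poly rat} := 1 - c *: 'X.

Lemma coef_Upol c (q : {poly rat}) i :
  (Upol c * q)`_i = q`_i - (if i is i'.+1 then c * q`_i' else 0).
Proof.
rewrite /Upol mulrBl mul1r coefB -scalerAl coefZ coefXM.
by case: i => [|i]; rewrite ?mulr0.
Qed.

Lemma alg1 (c x a P : rat) : c * (x - a) * P - c * (x * P) = - (c * a) * P.
Proof.
by rewrite mulrA -mulrBl -mulrBr addrAC subrr sub0r mulrN mulNr.
Qed.

Lemma DP L c a : eqK L (Upol c * (PL L.+1 (powS c a))^`()) ((- (c * a)) *: PL L.+1 (powS c a)).
Proof.
move=> i Hi; rewrite coef_Upol coefZ coef_deriv !coef_PL ?ltnS ?(ltnW Hi) //.
rewrite -mulr_natl powS_rec.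
case: i Hi => [|i] Hi.
  by rewrite subr0 sub0r mulrN mulNr.
rewrite coef_deriv coef_PL; last by rewrite ltnS ltnW.
by rewrite -(mulr_natl (powS c a i.+1)) alg1.
Qed.

Definition Apol L c b : {poly rat} := 1 - PL L.+1 (powS c b).
Definition Fpol L c b e m : {poly rat} := Apol L c b ^+ m * PL L.+1 (powS c e).

Lemma DA L c b kk : c * b = kk ->
  eqK L (Upol c * (Apol L c b)^`()) (kk *: PL L.+1 (powS c b)).
Proof.
move=> hb i Hi; rewrite /Apol derivB -polyC1 derivC sub0r mulrN coefN.
by rewrite (DP _ _ _ _ Hi) !coefZ hb mulNr opprK.
Qed.

Lemma DB L c e a0 : - (c * e) = a0 ->
  eqK L (Upol c * (PL L.+1 (powS c e))^`()) (a0 *: PL L.+1 (powS c e)).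
Proof. by move=> he i Hi; rewrite (DP _ _ _ _ Hi) he. Qed.

Lemma eqK_muln L (p q : {poly rat}) n : eqK L p q -> eqK L (p *+ n) (q *+ n).
Proof. by move=> H i Hi; rewrite !coefMn H. Qed.

Lemma main_eq L c b e kk a0 m : c * b = kk -> - (c * e) = a0 ->
  eqK L (Upol c * (Fpol L c b e m)^`())
        ((kk * m%:R) *: Fpol L c b e m.-1 + (a0 - kk * m%:R) *: Fpol L c b e m).
Proof.
move=> hb he.
set A := Apol L c b; set B := PL L.+1 (powS c e); set Pa := PL L.+1 (powS c b).
rewrite /Fpol -/A -/B derivM deriv_exp mulrDr.
apply: (@eqK_trans _ _ ((kk *: Pa * (A ^+ m.-1 * B)) *+ m + A ^+ m * (a0 *: B))).
  apply: eqK_add.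
    rewrite mulrnAl mulrnAr -(mulrA (A^`())) (mulrA (Upol c)).
    by apply/eqK_muln/eqK_mulr/DA.
  by rewrite mulrCA; apply/eqK_mull/DB.
have HPa : Pa = 1 - A by rewrite /A /Apol subKr.
rewrite HPa.
case: m => [|m].
  by rewrite mulr0n !mulr0 subr0 scale0r add0r expr0 mul1r => i _; rewrite add0r mul1r.
move=> i Hi; congr (_`_i).
rewrite /= -scalerAl mulrBl mul1r mulrA -exprS scalerBr -scaler_nat scalerBr !scalerA.
by rewrite -scalerAr scalerBl (mulrC _ kk) addrA addrAC.
Qed.


Lemma coef_rec L c b e kk a0 m N : c * b = kk -> - (c * e) = a0 -> (N < L)%N ->
  (N.+1)%:R * (Fpol L c b e m)`_N.+1 =
   c * N%:R * (Fpol L c b e m)`_N + (kk * m%:R) * (Fpol L c b e m.-1)`_N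
   + (a0 - kk * m%:R) * (Fpol L c b e m)`_N.
Proof.
move=> hb he HN; have := main_eq L c b e kk a0 m hb he N HN.
rewrite coef_Upol coefD !coefZ.
case: N HN => [|N] HN H.
  rewrite subr0 coef_deriv in H.
  by rewrite mulr0 mul0r add0r -H mulr1n mul1r.
rewrite !coef_deriv in H.
move/eqP: H; rewrite subr_eq => /eqP H.
rewrite mulr_natl H addrC -(mulr_natl ((Fpol L c b e m)`_N.+1)) mulrA.
by rewrite addrA.
Qed.

Definition Gf (c b e : rat) m : fps :=
  fmul (fpow (fun i => fone i - powS c b i) m) (powS c e).

Lemma G_coef L c b e m N : (N < L.+1)%N -> Gf c b e m N = (Fpol L c b e m)`_N.
Proof.
move=> HN; rewrite /Gf /Fpol.
apply: (fmul_coef L.+1) => // i Hi.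
  apply: (fpow_coef L.+1) => // i' Hi'.
  by rewrite /Apol coefB coef1 coef_PL.
by rewrite coef_PL.
Qed.

Lemma G_rec c b e kk a0 m N : c * b = kk -> - (c * e) = a0 ->
  (N.+1)%:R * Gf c b e m N.+1 =
   c * N%:R * Gf c b e m N + (kk * m%:R) * Gf c b e m.-1 N
   + (a0 - kk * m%:R) * Gf c b e m N.
Proof.
move=> hb he; rewrite !(G_coef N.+1) //.
exact: coef_rec.
Qed.

Lemma powS0 c a : powS c a 0 = 1.
Proof. by rewrite /powS /gbinom big_ord0 fact0 divr1 mul1r. Qed.

Lemma fpow0 f m : fpow f m 0 = f 0 ^+ m.
Proof.
elim: m => [|m IH]; first by [].
rewrite /fpow iterS -/(fpow f m) /fmul big_ord1 subnn IH exprS.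
by [].
Qed.

Lemma G_zero c b e m : Gf c b e m 0 = (m == 0%N)%:R.
Proof.
rewrite /Gf /fmul big_ord1 subnn fpow0 !powS0 /fone eqxx subrr mulr1.
by rewrite expr0n.
Qed.

Lemma alg2 (Tc G G' A B km : rat) :
  (A + B) * (Tc * G) + km * (Tc * G') = Tc * (A * G + km * G' + B * G).
Proof.
by rewrite mulrDl !mulrDr (mulrCA A) (mulrCA B) (mulrCA km) addrAC.
Qed.

Lemma natz_rat (n : nat) : (n%:Z)%:~R = n%:R :> rat.
Proof. by []. Qed.

Theorem mainTheorem11 (k : nat) (hk : (1 <= k)%N) :
  (* recurrence, for n > j >= 1, m >= 0 (with T_{n-1,j,-1} = 0) *)
  (forall n j m : nat, (1 <= j)%N -> (j < n)%N ->
     (Tnjm k n j m)%:Z =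
       (((k.+1 * n)%N)%:Z - ((k * m)%N)%:Z - ((2 * k)%N)%:Z) * (Tnjm k n.-1 j m)%:Z
       + ((k * m)%N)%:Z * (if m is m'.+1 then (Tnjm k n.-1 j m')%:Z else 0%R))
  /\
  (* T_j = prod_{l=0}^{j-1} (1 + (k+1) l) *)
  (forall j : nat, Tcount k j = (\prod_(l < j) (1 + k.+1 * l))%N)
  /\
  (* generating function: coefficient of z^N v^m in T^[j](z,v), N = n - j *)
  (forall j m N : nat, (1 <= j)%N ->
     ((Tnjm k (j + N) j m)%:R / (N`!)%:R : rat) =
       (Tcount k j)%:R *
       fmul (fpow (fun i => fone i - powS (k.+1)%:R (k%:R / (k.+1)%:R) i) m)
            (powS (k.+1)%:R (- (((k * j - k + j + 1)%N)%:R / (k.+1)%:R))) N).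
Proof.
have Hrec : forall n j m : nat, (1 <= j)%N -> (j < n)%N ->
     (Tnjm k n j m)%:Z =
       (((k.+1 * n)%N)%:Z - ((k * m)%N)%:Z - ((2 * k)%N)%:Z) * (Tnjm k n.-1 j m)%:Z
       + ((k * m)%N)%:Z * (if m is m'.+1 then (Tnjm k n.-1 j m')%:Z else 0%R).
  move=> [|n] j m hj hjn //.
  rewrite (rec_int k n j m hk hj hjn) /=.
  case: m => [|m]; first by rewrite muln0 !mul0r.
  by congr (_ + _ * _); rewrite /Tnjm; congr (_%:Z); apply: eq_count => t.
split => //; split; first by move=> j; exact: Tcount_prod.
move=> j m N hj.
set c : rat := (k.+1)%:R.
set b : rat := k%:R / c.
set a0 := (k * j - k + j + 1)%N.
set e : rat := - (a0%:R / c).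
have Hc : c != 0 by rewrite /c pnatr_eq0.
have hb : c * b = k%:R by rewrite /b mulrC divfK.
have he : - (c * e) = a0%:R by rewrite /e mulrN opprK mulrC divfK.
change ((Tnjm k (j + N) j m)%:R / (N`!)%:R = (Tcount k j)%:R * Gf c b e m N).
elim: N m => [|N IH] m.
  by rewrite addn0 Tnjm_base // fact0 divr1 G_zero natrM mulrC.
have hjn : (j < (j + N).+1)%N by rewrite ltnS leq_addr.
have E := Hrec _ _ m hj hjn.
have E' := congr1 (fun z : int => z%:~R : rat) E.
rewrite /= !intrD !intrM !intrB !natz_rat in E'.
have E2 : ((k * m)%N%:R * (if m is m'.+1 then (Tnjm k (j + N) j m')%:Z else 0%R)%:~R
           = (k * m)%N%:R * (Tnjm k (j + N) j m.-1)%:R :> rat).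
  by case: m {E E'} => [|m]; rewrite ?muln0 ?mul0r.
rewrite E2 in E'.
have HX : ((k.+1 * (j + N).+1)%N%:R - (k * m)%N%:R - (2 * k)%N%:R : rat)
          = c * N%:R + (a0%:R - k%:R * m%:R).
  have Hkj : (k <= k * j)%N by rewrite leq_pmulr.
  have En : (k.+1 * (j + N).+1 = k.+1 * N + a0 + 2 * k)%N.
    rewrite /a0; nlia.
  rewrite En (natrD _ (k.+1 * N + a0)%N) (natrD _ (k.+1 * N)%N) (addrAC _ (2 * k)%N%:R) addrK -addrA !natrM.
  by [].
rewrite addnS E' HX factS (natrM _ N.+1 N`!) invfM mulrCA mulrDl -!mulrA IH IH.
rewrite !natrM alg2 -(G_rec c b e k%:R a0%:R m N hb he).
by rewrite mulrCA mulKf // pnatr_eq0.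
Qed.
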